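(* Let $A$ be a circular $m\times n$ matrix and let $b\in\mathbb{Z}_+^m$. Then $Q^*(A,b)$ is equal to the set of points $x\in\mathbb{R}^n$ satisfying $Ax\ge b$, $x\ge 0$, and all $\Gamma$-inequalities (with respect to $b$) for the circuits $\Gamma$ of $D(A)$ such that $p(\Gamma)\ge 2$ and $p(\Gamma)$ does not divide $t(\Gamma,b)$.
   Context: Notation: $[n]=\{1,\dots,n\}$ with addition modulo $n$ (index $0$ is identified with $n$). For $a,c\in[n]$, let $t\ge 0$ be minimal with $a+t\equiv c \pmod n$; then $[a,c]_n=\{a,a+1,\dots,a+t\}$ (mod $n$), $[a,c)_n=[a,c]_n\setminus\{c\}$, $(a,c]_n=[a,c]_n\setminus\{a\}$, $(a,c)_n=[a,c]_n\setminus\{a,c\}$. An $m\times n$ $\{0,1\}$-matrix $A$ (rows indexed by $[m]$, columns by $[n]$) is circular if for each row $i$ there are $\ell_i\in[n]$ and an integer $k_i$ with $2\le k_i\le n-1$ such that row $i$ is the incidence vector of $[\ell_i,\ell_i+k_i)_n$. For $b\in\mathbb{Z}_+^m$: $Q(A,b)=\{x\in\mathbb{R}^n: Ax\ge b,\ x\ge 0\}$ and $Q^*(A,b)=\operatorname{conv}(Q(A,b)\cap\mathbb{Z}^n)$. The digraph $D(A)$ (multigraph allowed) has node set $[n]$ (node labels mod $n$) and four arc sets: forward row arcs $a_i=(\ell_i-1,\ell_i+k_i-1)$, $i\in[m]$; forward short arcs $a_{m+j}=(j-1,j)$, $j\in[n]$; reverse row arcs $\bar a_i=(\ell_i+k_i-1,\ell_i-1)$,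 $i\in[m]$; reverse short arcs $\bar a_{m+j}=(j,j-1)$, $j\in[n]$. Lengths: $l(a_i)=k_i$, $l(\bar a_i)=-k_i$, forward short arcs have length $1$, reverse short arcs length $-1$. A circuit is a simple directed circuit; for a closed directed path $\Gamma$, its winding number $p(\Gamma)$ is the integer with $p(\Gamma)\,n=\sum_{a\in E(\Gamma)}l(a)$. A forward row arc $a_i$ jumps over node $j$ iff $j\in[\ell_i,\ell_i+k_i)_n$; the forward short arc $(j-1,j)$ jumps over node $j$ only; a reverse arc $\bar a_k$ jumps over $j$ iff $a_k$ does. $p^-(\Gamma,j)$ is the number of reverse arcs of $\Gamma$ jumping over $j$. For a circuit $\Gamma$: $t(\Gamma,b)=\sum_{i\in[m]:a_i\in E(\Gamma)}b_i-\sum_{i\in[m]:\bar a_i\in E(\Gamma)}b_i$; if $p(\Gamma)\neq 0$, $\beta(\Gamma,b)=\lfloor t(\Gamma,b)/p(\Gamma)\rfloor$, $r(\Gamma,b)=t(\Gamma,b)-\beta(\Gamma,b)p(\Gamma)$, and the $\Gamma$-inequality is $\sum_{j\in[n]}[p^-(\Gamma,j)+r(\Gamma,b)]x_j\ge r(\Gamma,b)(\beta(\Gamma,b)+1)+\sum_{i\in[m]:\bar a_i\in E(\Gamma)}b_i$. *)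

(* Defs.v *)
From mathcomp Require Import all_boot all_order all_algebra.
From mathcomp Require Import reals.
Set Implicit Arguments.
Unset Strict Implicit.
Unset Printing Implicit Defensive.
Import Order.TTheory GRing.Theory Num.Theory.
Local Open Scope ring_scope.

(* Convention: the paper's index j in [n] = {1,..,n} (taken mod n) is
   represented by the ordinal (j mod n) : 'I_n, i.e. paper index n <-> 0.
   Nodes of D(A) are represented by naturals in [0,n).                    *)

(* Arcs of the multigraph D(A): forward row arc a_i, forward short arc
   a_{m+j}, reverse row arc bar a_i, reverse short arc bar a_{m+j}.       *)
Inductive darc (m n : nat) : Type :=
| FRow of 'I_m | FShort of 'I_n | RRow of 'I_m | RShort of 'I_n.

Section Digraph.
Variables (m n : nat) (l : 'I_m -> 'I_n) (k : 'I_m -> nat).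

Definition in_row (i : 'I_m) (j : 'I_n) : bool := (((j + n - l i) %% n) < k i)%N.

Definition arc_tail (a : darc m n) : nat :=
  match a with
  | FRow i => ((l i + n - 1) %% n)%N
  | FShort j => ((j + n - 1) %% n)%N
  | RRow i => ((l i + k i + n - 1) %% n)%N
  | RShort j => nat_of_ord j
  end.

Definition arc_head (a : darc m n) : nat :=
  match a with
  | FRow i => ((l i + k i + n - 1) %% n)%N
  | FShort j => nat_of_ord j
  | RRow i => ((l i + n - 1) %% n)%N
  | RShort j => ((j + n - 1) %% n)%N
  end.

Definition arc_len (a : darc m n) : int :=
  match a with
  | FRow i => (k i)%:Z
  | FShort _ => 1
  | RRow i => - (k i)%:Z
  | RShort _ => -1
  end.

Definition is_rev (a : darc m n) : bool :=
  match a with RRow _ | RShort _ => true | _ => false end.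

Definition jumps (a : darc m n) (j : 'I_n) : bool :=
  match a with
  | FRow i | RRow i => in_row i j
  | FShort j' | RShort j' => j == j'
  end.

(* simple directed circuit, given as the cyclic sequence of its arcs:
   head(e_t) = tail(e_{t+1}) cyclically, and no node is visited twice *)
Definition circuit (s : seq (darc m n)) : Prop :=
  s <> [::] /\ uniq (map arc_tail s) /\ map arc_head s = rot 1 (map arc_tail s).

(* winding number: p(Gamma) * n = total length *)
Definition wind (s : seq (darc m n)) : int :=
  ((\sum_(a <- s) arc_len a) %/ (n%:Z))%Z.

Definition arc_b (b : 'I_m -> nat) (a : darc m n) : int :=
  match a with
  | FRow i => (b i)%:Z
  | RRow i => - (b i)%:Z
  | _ => 0
  end.

Definition t_gamma (b : 'I_m -> nat) (s : seq (darc m n)) : int :=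
  \sum_(a <- s) arc_b b a.

Definition beta_gamma (b : 'I_m -> nat) (s : seq (darc m n)) : int :=
  Num.floor ((t_gamma b s)%:~R / (wind s)%:~R : rat).

Definition r_gamma (b : 'I_m -> nat) (s : seq (darc m n)) : int :=
  t_gamma b s - beta_gamma b s * wind s.

Definition pminus (s : seq (darc m n)) (j : 'I_n) : nat :=
  count (fun a => is_rev a && jumps a j) s.

Definition rev_b (b : 'I_m -> nat) (s : seq (darc m n)) : int :=
  \sum_(a <- s) (match a with RRow i => (b i)%:Z | _ => 0 end).

Definition gamma_ineq (R : realType) (b : 'I_m -> nat) (s : seq (darc m n))
    (x : 'cV[R]_n) : Prop :=
  ((r_gamma b s * (beta_gamma b s + 1) + rev_b b s)%:~R : R)
    <= \sum_(j < n) ((pminus s j)%:Z + r_gamma b s)%:~R * x j 0.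

Definition is_circular (R : realType) (A : 'M[R]_(m, n)) : Prop :=
  forall i, (2 <= k i <= n - 1)%N /\
            forall j, A i j = (if in_row i j then 1 else 0).

End Digraph.

Section Polyhedra.
Variables (R : realType) (m n : nat).

Definition inQ (A : 'M[R]_(m, n)) (b : 'I_m -> nat) (x : 'cV[R]_n) : Prop :=
  (forall i, (b i)%:R <= (A *m x) i 0) /\ (forall j, 0 <= x j 0).

Definition is_int_vec (x : 'cV[R]_n) : Prop :=
  forall j, exists z : int, x j 0 = z%:~R.

Definition conv_hull (S : 'cV[R]_n -> Prop) (x : 'cV[R]_n) : Prop :=
  exists (N : nat) (pts : 'I_N -> 'cV[R]_n) (lam : 'I_N -> R),
    (forall t, 0 <= lam t) /\ \sum_t lam t = 1 /\ (forall t, S (pts t)) /\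
    x = \sum_t lam t *: pts t.

Definition inQstar (A : 'M[R]_(m, n)) (b : 'I_m -> nat) (x : 'cV[R]_n) : Prop :=
  conv_hull (fun y => inQ A b y /\ is_int_vec y) x.

End Polyhedra.

(* Main.v *)
Require Import Defs.
From mathcomp Require Import all_boot all_order all_algebra.
From mathcomp Require Import reals.
From mathcomp Require Import zify ring lra.
Set Implicit Arguments.
Unset Strict Implicit.
Unset Printing Implicit Defensive.
Import Order.TTheory GRing.Theory Num.Theory.
Local Open Scope ring_scope.

Section BF.
Variables (R : realType) (A : Type) (tl hd : A -> nat) (n : nat) (arcs : seq A)
  (w : A -> R).
Hypothesis tl_lt : forall a, (tl a < n)%N.
Hypothesis allin : forall a, List.In a arcs.
Hypothesis circ : forall c : seq A, c <> [::] -> uniq (map tl c) ->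
  map hd c = rot 1 (map tl c) -> \sum_(a <- c) w a <= 0.

Fixpoint wpath (x : nat) (s : seq A) : bool :=
  if s is a :: s' then (tl a == x) && wpath (hd a) s' else true.
Definition wend x s := last x (map hd s).
Definition weight s := \sum_(a <- s) w a.

Lemma wpath_cat x s1 s2 : wpath x (s1 ++ s2) = wpath x s1 && wpath (wend x s1) s2.
Proof.
elim: s1 x => [|a s1 IH] x //=. by rewrite IH andbA.
Qed.

Lemma wend_cat x s1 s2 : wend x (s1 ++ s2) = wend (wend x s1) s2.
Proof. by rewrite /wend map_cat last_cat. Qed.

Lemma wpath_heads x a p : wpath x (a :: p) ->
  map hd (a :: p) = rcons (map tl p) (wend x (a :: p)).
Proof.
elim: p x a => [|c p IH] x a /=; first by [].
case/andP=> _ /andP[/eqP hc hp].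
have := IH (hd a) c; rewrite /= -hc eqxx hp => /(_ isT) ->.
by rewrite hc /wend.
Qed.

Lemma uniqify s x : wpath x s -> exists s', [/\ wpath x s', uniq (map tl s'),
  wend x s' = wend x s & weight s <= weight s'].
Proof.
elim: s x => [|a s1 IH] x.
  by move=> _; exists [::]; split.
case/andP=> /eqP ha hp.
have [s1' [hp' hu' he' hw']] := IH _ hp.
case: (boolP (x \in map tl s1')) => hx; last first.
  exists (a :: s1'); split; rewrite /= ?ha ?eqxx ?hx ?hu' //.
  by rewrite /weight !big_cons lerD2l.
set i := index x (map tl s1').
have hi : (i < size s1')%N by rewrite -(size_map tl) index_mem.
pose p := take i s1'.
have hdrop : drop i s1' = nth a s1' i :: drop i.+1 s1' by rewrite (drop_nth a).
set c := nth a s1' i in hdrop.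
pose q := drop i.+1 s1'.
have hs : s1' = p ++ c :: q by rewrite -hdrop cat_take_drop.
have htc : tl c = x.
  by rewrite /c -(nth_map a 0) // nth_index.
move: hp' hu' he'; rewrite hs wpath_cat => /andP[hpp hcq] hu he.
have hwc : wend (hd a) p = x by move: hcq => /= /andP[/eqP <- _].
have hxp : x \notin map tl p.
  rewrite /p map_take.
  by rewrite in_take // ltnn.
have hC : \sum_(e <- a :: p) w e <= 0.
  apply: circ => //.
  - rewrite /= ha hxp /=; by move: hu; rewrite map_cat cat_uniq => /andP[->].
  - have hw : wpath x (a :: p) by rewrite /= ha eqxx hpp.
    rewrite (wpath_heads hw) /= ha rot1_cons /wend /= -/(wend _ _) hwc //.
exists (c :: q); split.
- by rewrite -hwc.
- by move: hu; rewrite map_cat cat_uniq => /and3P[].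
- by rewrite [RHS]/wend /= -/(wend (hd a) s1) -he wend_cat hwc.
- move: hw'; rewrite hs /weight !big_cons big_cat /= => h.
  move: hC h; rewrite !big_cons => hC h. lra.
Qed.

Lemma uniq_size s : uniq (map tl s) -> (size s <= n)%N.
Proof.
move=> hu; rewrite -(size_map tl) -(size_iota 0 n); apply: uniq_leq_size => //.
have hall : all (fun y => (y < n)%N) (map tl s).
  by elim: (s) => //= a s' ->; rewrite tl_lt.
by move=> y hy; rewrite mem_iota add0n (allP hall y hy).
Qed.

Definition step (pi : nat -> R) (j : nat) (a : A) (acc : R) :=
  if hd a == j then Num.max acc (pi (tl a) + w a) else acc.

Fixpoint pi (N : nat) (j : nat) : R :=
  if N is N'.+1 then foldr (step (pi N') j) (pi N' j) arcs else 0.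

Lemma fold_ge (f : nat -> R) j (s : seq A) :
  f j <= foldr (step f j) (f j) s /\
  (forall a, List.In a s -> hd a = j -> f (tl a) + w a <= foldr (step f j) (f j) s) /\
  (foldr (step f j) (f j) s = f j \/
   exists a, [/\ List.In a s, hd a = j & foldr (step f j) (f j) s = f (tl a) + w a]).
Proof.
elim: s => [|a s [h1 [h2 h3]]] /=; first by split => //; split => //; left.
rewrite /step; case: eqP => ha.
- split; first by rewrite le_max h1.
  split.
    move=> e [<- _|he hej]; first by rewrite le_max lexx orbT.
    by rewrite le_max h2.
  rewrite /Num.max; case: ifP => _.
    by right; exists a; split => //; left.
  case: h3 => [->|[e [he1 he2 he3]]]; first by left.
  by right; exists e; split => //; right.
- split => //; split.
    move=> e [<- //|he hej]; exact: h2.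
  case: h3 => [->|[e [he1 he2 he3]]]; first by left.
  by right; exists e; split => //; right.
Qed.

Lemma pi_mono N j : pi N j <= pi N.+1 j.
Proof. by have [h _] := fold_ge (pi N) j arcs. Qed.

Lemma pi_ge0 N j : 0 <= pi N j.
Proof.
elim: N j => [|N IH] j /=; first by [].
apply: le_trans (IH j) (pi_mono N j).
Qed.

Lemma pi_upper N x s : wpath x s -> (size s <= N)%N -> weight s <= pi N (wend x s).
Proof.
elim: N x s => [|N IH] x s.
  by case: s => //= _ _; rewrite /weight big_nil.
case/lastP: s => [|s a].
  by move=> _ _; rewrite /weight big_nil pi_ge0.
rewrite -cats1 wpath_cat size_cat addn1 ltnS => /andP[hs /= /andP[/eqP ha _]] hN.
rewrite /weight big_cat big_seq1 wend_cat /wend /=.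
have := IH _ _ hs hN; rewrite -/(weight s) => h.
have [_ [h2 _]] := fold_ge (pi N) (hd a) arcs.
apply: le_trans (h2 a (allin a) erefl).
by rewrite lerD2r ha.
Qed.

Lemma pi_attained N j : exists x s, [/\ wpath x s, (size s <= N)%N, wend x s = j &
  pi N j = weight s].
Proof.
elim: N j => [|N IH] j.
  by exists j, [::]; split => //; rewrite /weight big_nil.
rewrite [pi N.+1 j]/=.
have [_ [_ [h|[a [_ ha ->]]]]] := fold_ge (pi N) j arcs.
  have [x [s [h1 h2 h3 h4]]] := IH j.
  by exists x, s; split => //; [exact: leqW | rewrite h].
have [x [s [h1 h2 h3 h4]]] := IH (tl a).
exists x, (rcons s a); split.
- by rewrite -cats1 wpath_cat h1 /= h3 eqxx.
- by rewrite size_rcons ltnS.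
- by rewrite /wend map_rcons last_rcons.
- by rewrite /weight -cats1 big_cat big_seq1 -/(weight s) h4.
Qed.

Lemma BF_feasible : exists v : nat -> R, forall a, w a <= v (hd a) - v (tl a).
Proof.
exists (pi n) => a.
have [x [s [h1 h2 h3 h4]]] := pi_attained n (tl a).
have hw : wpath x (rcons s a) by rewrite -cats1 wpath_cat h1 /= h3 eqxx.
have [s' [hp hu he hws]] := uniqify hw.
have := pi_upper hp (uniq_size hu).
rewrite he /wend map_rcons last_rcons => hle.
have : weight (rcons s a) = pi n (tl a) + w a.
  by rewrite /weight -cats1 big_cat big_seq1 -/(weight s) h4.
move=> e; rewrite e in hws. lra.
Qed.
End BF.

Section Arcs.
Variables (R : realType) (m n : nat) (l : 'I_m -> 'I_n) (k : 'I_m -> nat).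
Hypothesis n0 : (0 < n)%N.
Hypothesis hk : forall i, (k i <= n)%N.

Definition base (a : darc m n) : nat :=
  match a with
  | FRow i | RRow i => ((l i + n - 1) %% n)%N
  | FShort j | RShort j => ((j + n - 1) %% n)%N
  end.
Definition K (a : darc m n) : nat :=
  match a with FRow i | RRow i => k i | _ => 1%N end.
Definition eps (a : darc m n) : R := if is_rev a then -1 else 1.
Definition Delta (f : nat -> R) a := eps a * (f (base a + K a)%N - f (base a)).
Definition sig (a : darc m n) : int :=
  (if is_rev a then -1 else 1) * (((base a + K a) %/ n)%N)%:Z.
Definition per (f : nat -> R) (Y : R) := forall z, f (z + n)%N = f z + Y.

Lemma tail_lt a : (arc_tail l k a < n)%N.
Proof. by case: a => [i|j|i|j] /=; rewrite ?ltn_pmod. Qed.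
Lemma head_lt a : (arc_head l k a < n)%N.
Proof. by case: a => [i|j|i|j] /=; rewrite ?ltn_pmod. Qed.

Lemma endpE a : ((base a + K a) %% n)%N =
  if is_rev a then arc_tail l k a else arc_head l k a.
Proof.
case: a => [i|j|i|j] /=; rewrite modnDml.
- by congr (_ %% _)%N; lia.
- have -> : (j + n - 1 + 1 = j + n)%N by lia.
  by rewrite modnDr modn_small.
- by congr (_ %% _)%N; lia.
- have -> : (j + n - 1 + 1 = j + n)%N by lia.
  by rewrite modnDr modn_small.
Qed.

Lemma per_iter f Y : per f Y -> forall z q, f (z + q * n)%N = f z + q%:R * Y.
Proof.
move=> hp z; elim=> [|q IH]; first by rewrite mul0n addn0 mul0r addr0.
by rewrite mulSn addnA (addnC z) -addnA addnC hp IH mulrSr; ring.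
Qed.

Lemma Delta_per f Y a : per f Y ->
  Delta f a = f (arc_head l k a) - f (arc_tail l k a) + (sig a)%:~R * Y.
Proof.
move=> hp; rewrite /Delta /sig.
set q := ((base a + K a) %/ n)%N.
have hf : f (base a + K a)%N = f (if is_rev a then arc_tail l k a else arc_head l k a)
   + q%:R * Y.
  by rewrite -endpE -(per_iter hp) [(_ %% n + _)%N]addnC -divn_eq.
rewrite hf /eps.
have hb : base a = if is_rev a then arc_head l k a else arc_tail l k a.
  by case: a {hf q}.
rewrite hb; case: (is_rev a); rewrite ?mul1r ?mulN1r ?rmorphN /= pmulrn; ring.
Qed.

Lemma len_sig a : arc_len k a =
  (arc_head l k a)%:Z - (arc_tail l k a)%:Z + sig a * n%:Z.
Proof.
rewrite /sig.
set q := ((base a + K a) %/ n)%N.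
have e : (base a + K a = q * n + (if is_rev a then arc_tail l k a else arc_head l k a))%N.
  by rewrite -endpE -divn_eq.
have hb : base a = if is_rev a then arc_head l k a else arc_tail l k a.
  by case: a {e q}.
move: e; rewrite hb.
clearbody q; case: a {hb} => [i|j|i|j] /= e; nia.
Qed.

Lemma sum_headtail (V : zmodType) (g : nat -> V) (s : seq (darc m n)) :
  map (arc_head l k) s = rot 1 (map (arc_tail l k) s) ->
  \sum_(a <- s) (g (arc_head l k a) - g (arc_tail l k a)) = 0.
Proof.
move=> e; rewrite sumrB -(big_map (arc_head l k) xpredT g) e.
have hp : perm_eq (rot 1 (map (arc_tail l k) s)) (map (arc_tail l k) s).
  by rewrite perm_rot perm_refl.
by rewrite (perm_big _ hp) big_map subrr.
Qed.

Lemma wind_sig s : circuit l k s -> wind k s = \sum_(a <- s) sig a.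
Proof.
case=> _ [_ e]; rewrite /wind.
have -> : \sum_(a <- s) arc_len k a = (\sum_(a <- s) sig a) * n%:Z.
  under eq_bigr do rewrite len_sig.
  by rewrite big_split /= (sum_headtail (fun z => z%:Z)) // add0r mulr_suml.
by rewrite mulzK //; apply/eqP => /eqP; rewrite eqz_nat; apply/negP; rewrite -lt0n.
Qed.

Lemma Delta_circ f Y s : circuit l k s -> per f Y ->
  \sum_(a <- s) Delta f a = (wind k s)%:~R * Y.
Proof.
move=> hc hp; have hw := wind_sig hc; case: hc => _ [_ e].
under eq_bigr do rewrite (Delta_per _ hp).
rewrite big_split /= (sum_headtail f) // add0r hw -mulr_suml rmorph_sum.
by [].
Qed.

Definition om (z : nat) : 'I_n := Ordinal (ltn_pmod z n0).
Definition ymat (f : nat -> R) : 'cV[R]_n := \col_c (f (c + n)%N - f (c + n).-1).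
Definition js (a : darc m n) (y : 'cV[R]_n) : R :=
  \sum_j (if jumps l k a j then y j 0 else 0).

Lemma omK (j : 'I_n) : om j = j.
Proof. by apply: val_inj; rewrite /= modn_small. Qed.

Lemma steps f Y : per f Y -> forall z, f z.+1 - f z = ymat f (om z.+1) 0.
Proof.
move=> hp z; rewrite mxE /=.
set c := (z.+1 %% n)%N; set q := (z.+1 %/ n)%N.
have e : (z.+1 = q * n + c)%N by rewrite /q /c -divn_eq.
have e1 : ((c + n) = (c + n) + 0 * n)%N by rewrite mul0n addn0.
have e2 : (z.+1 + n = (c + n) + q * n)%N by lia.
have e3 : (z + n = (c + n).-1 + q * n)%N by lia.
have := hp z.+1; have := hp z; rewrite e2 e3 !(per_iter hp) => h1 h2.
have : f z.+1 - f z = f (z.+1 + n)%N - f (z + n)%N by rewrite hp (hp z); ring.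
by rewrite e2 e3 !(per_iter hp) => ->; ring.
Qed.

Lemma tele f Y : per f Y -> forall s K',
  f (s + K')%N - f s = \sum_(d < K') ymat f (om (s + d).+1) 0.
Proof.
move=> hp s; elim=> [|K' IH]; first by rewrite addn0 big_ord0 subrr.
rewrite big_ord_recr /= -IH addnS -(steps hp); ring.
Qed.

Lemma rot_sum (F : 'I_n -> R) (c : nat) : \sum_j F j = \sum_(d < n) F (om (c + d)).
Proof.
have inj : injective (fun d : 'I_n => om (c + d)).
  move=> d1 d2 /(congr1 val) /= /eqP; rewrite eqn_modDl => /eqP.
  by rewrite !modn_small // => /val_inj.
exact: (reindex_inj inj).
Qed.

Lemma js_row f Y i : per f Y ->
  f ((l i + n - 1) %% n + k i)%N - f ((l i + n - 1) %% n)%N =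
  \sum_j (if in_row l k i j then ymat f j 0 else 0).
Proof.
move=> hp; rewrite (tele hp) (rot_sum _ (l i)) -big_mkcond /=.
have ee : forall d : 'I_n, in_row l k i (om (l i + d)) = (d < k i)%N.
  move=> d; rewrite /in_row /=; congr (_ < _)%N.
  apply/eqP; rewrite -(modn_small (ltn_ord d)) -(eqn_modDr (l i)).
  rewrite subnK; last by rewrite (leq_trans (ltnW (ltn_ord (l i)))) // leq_addl.
  by rewrite modnDml addnC modnDl (modn_small (ltn_ord d)) addnC.
rewrite (eq_bigl (fun d : 'I_n => (d < k i)%N)); last by move=> d; rewrite ee.
rewrite -(big_ord_widen n (fun d => ymat f (om (l i + d)) 0) (hk i)).
apply: eq_bigr => d _; congr (ymat f _ 0); apply: val_inj => /=.
rewrite -addn1 -addnA modnDml; have -> : (l i + n - 1 + (d + 1) = (l i + d) + n)%N by lia.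
by rewrite modnDr.
Qed.

Lemma js_short f Y (j : 'I_n) : per f Y ->
  f ((j + n - 1) %% n + 1)%N - f ((j + n - 1) %% n)%N =
  \sum_j' (if j' == j then ymat f j' 0 else 0).
Proof.
move=> hp; rewrite (tele hp) big_ord1 -big_mkcond /= big_pred1_eq; congr (ymat f _ 0).
apply: val_inj => /=; rewrite addn0 -addn1 modnDml.
have -> : (j + n - 1 + 1 = j + n)%N by lia.
by rewrite modnDr modn_small.
Qed.

Lemma js_lemma f Y a : per f Y -> f (base a + K a)%N - f (base a) = js a (ymat f).
Proof.
move=> hp; rewrite /js.
case: a => [i|j|i|j] /=; rewrite ?(js_row _ hp) ?(js_short _ hp) //.
Qed.

Lemma Delta_js f Y a : per f Y -> Delta f a = eps a * js a (ymat f).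
Proof. by move=> hp; rewrite /Delta (js_lemma _ hp). Qed.

End Arcs.

Section Conv.
Variables (R : realType) (n : nat).

Lemma conv_pt (S : 'cV[R]_n -> Prop) p : S p -> conv_hull S p.
Proof.
move=> hp; exists 1%N, (fun _ => p), (fun _ => 1).
by rewrite !big_ord1 scale1r.
Qed.

Lemma conv2 (S : 'cV[R]_n -> Prop) p q mu : conv_hull S p -> conv_hull S q ->
  0 <= mu <= 1 -> conv_hull S ((1 - mu) *: p + mu *: q).
Proof.
move=> [N1 [pp [lp [h1 [h2 [h3 ->]]]]]] [N2 [qq [lq [g1 [g2 [g3 ->]]]]]] /andP[m0 m1].
pose pts (t : 'I_(N1 + N2)) := match fintype.split t with inl i => pp i | inr j => qq j end.
pose lam (t : 'I_(N1 + N2)) := match fintype.split t with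
  inl i => (1 - mu) * lp i | inr j => mu * lq j end.
have sl : forall i, fintype.split (lshift N2 i) = inl i := fun i => unsplitK (inl i).
have sr : forall j, fintype.split (rshift N1 j) = inr j := fun j => unsplitK (inr j).
exists (N1 + N2)%N, pts, lam; do !split.
- move=> t; rewrite /lam; case: (fintype.split t) => [i|j]; apply: mulr_ge0 => //.
  by rewrite subr_ge0.
- rewrite big_split_ord /=.
  rewrite (eq_bigr (fun i => (1 - mu) * lp i)); last by move=> i _; rewrite /lam sl.
  rewrite [X in _ + X](eq_bigr (fun i => mu * lq i)); last by move=> i _; rewrite /lam sr.
  by rewrite -!mulr_sumr h2 g2 !mulr1 subrK.
- by move=> t; rewrite /pts; case: (fintype.split t).
- rewrite [RHS]big_split_ord /= !scaler_sumr; congr (_ + _); apply: eq_bigr => i _.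
  + by rewrite /lam /pts sl scalerA.
  + by rewrite /lam /pts sr scalerA.
Qed.
End Conv.

Section Q.
Variables (R : realType) (m n : nat) (A : 'M[R]_(m, n)) (l : 'I_m -> 'I_n)
  (k : 'I_m -> nat) (b : 'I_m -> nat).
Hypothesis n0 : (0 < n)%N.
Hypothesis hc : is_circular l k A.

Lemma hk i : (k i <= n)%N.
Proof. by have [/andP[_ h] _] := hc i; apply: leq_trans h (leq_subr _ _). Qed.

Definition bb (a : darc m n) : R :=
  match a with FRow i | RRow i => (b i)%:R | _ => 0 end.

Lemma Amul (y : 'cV[R]_n) i : (A *m y) i 0 = js l k (FRow n i) y.
Proof.
rewrite mxE /js; apply: eq_bigr => j _ /=.
by have [_ ->] := hc i; case: in_row; rewrite ?mul1r ?mul0r.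
Qed.

Lemma inQ_js (y : 'cV[R]_n) : inQ A b y -> forall a, bb a <= js l k a y.
Proof.
case=> h1 h2; case=> [i|j|i|j] /=; rewrite ?(Amul y i) //.
- by rewrite -(Amul y i).
- by rewrite /js -big_mkcond /= big_pred1_eq.
- by have := h1 i; rewrite Amul.
- by rewrite /js -big_mkcond /= big_pred1_eq.
Qed.

Lemma ymat_lin (c1 c2 : R) f g :
  ymat n (fun z => c1 * f z + c2 * g z) = c1 *: ymat n f + c2 *: ymat n g.
Proof. by apply/matrixP => i j; rewrite !mxE; ring. Qed.

Definition ax (x : 'cV[R]_n) (z : nat) : R := \sum_(0 <= i < z) x (om n0 i.+1) 0.

Lemma per_ax x : per n (ax x) (\sum_j x j 0).
Proof.
move=> z; rewrite /ax (big_cat_nat (leq0n z) (leq_addr n z)) /=; congr (_ + _).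
rewrite -{1}(add0n z) big_addn addKn big_mkord [RHS](rot_sum n0 _ z.+1).
apply: eq_bigr => d _; congr (x _ 0); apply: val_inj => /=.
by rewrite addnC addSn.
Qed.

Lemma ymat_ax x : ymat n (ax x) = x.
Proof.
apply/matrixP => i j; rewrite (ord1 j) mxE /ax.
have -> : (i + n = (i + n).-1.+1)%N by rewrite prednK // addn_gt0 n0 orbT.
rewrite big_nat_recr //= addrAC subrr add0r; congr (x _ 0).
by rewrite prednK ?addn_gt0 ?n0 ?orbT //; apply: val_inj => /=; rewrite modnDr modn_small.
Qed.

Definition good (f : nat -> R) (M : int) :=
  [/\ per n f M%:~R, forall z, f z <= f z.+1 &
      forall i, (b i)%:R <= f (base l (FRow n i) + k i)%N - f (base l (FRow n i))].

Lemma good_inQ f M : good f M -> inQ A b (ymat n f).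
Proof.
case=> hp hm hr; split.
- move=> i; rewrite Amul -(js_lemma l n0 hk _ hp); exact: hr.
- move=> j; rewrite mxE subr_ge0.
  have -> : (j + n = (j + n).-1.+1)%N by rewrite prednK // addn_gt0 n0 orbT.
  by rewrite hm.
Qed.

End Q.

Section Frac.
Variable R : realType.
Definition isint (x : R) : bool := (Num.floor x)%:~R == x.
Definition frac (x : R) : R := x - (Num.floor x)%:~R.

Lemma frac_ge0 (x : R) : 0 <= frac x.
Proof. by rewrite /frac subr_ge0 floor_le. Qed.
Lemma frac_lt1 (x : R) : frac x < 1.
Proof. by have := floorD1_gt x; rewrite /frac rmorphD /=; lra. Qed.
Lemma frac0 (x : R) : (frac x == 0) = isint x.
Proof. by rewrite /frac subr_eq0 eq_sym. Qed.
Lemma floorDint (x : R) (M : int) : Num.floor (x + M%:~R) = Num.floor x + M.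
Proof. by rewrite floorDrz ?intr_int // intrKfloor. Qed.
Lemma fracDint (x : R) (M : int) : frac (x + M%:~R) = frac x.
Proof. by rewrite /frac floorDint rmorphD /=; ring. Qed.
Lemma isint_floor (x : R) : isint x -> x = (Num.floor x)%:~R.
Proof. by move/eqP. Qed.
Lemma isintDint (x : R) (M : int) : isint (x + M%:~R) = isint x.
Proof. by rewrite -!frac0 fracDint. Qed.
Lemma isint_int (z : int) : isint (z%:~R : R).
Proof. by rewrite /isint intrKfloor. Qed.

Lemma floor_step (x y : R) (c : int) : x + c%:~R <= y ->
  (Num.floor x)%:~R + c%:~R <= (Num.floor y)%:~R :> R.
Proof.
move=> h; rewrite -rmorphD ler_int floor_ge_int rmorphD /=.
by apply: le_trans h; rewrite lerD2r floor_le.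
Qed.

Lemma frac_step (x y : R) (c : int) (phi : R) : x + c%:~R <= y -> 0 < phi ->
  frac x <= phi -> frac y <= phi ->
  (Num.floor x)%:~R + frac x / phi + c%:~R <= (Num.floor y)%:~R + frac y / phi.
Proof.
move=> h hp hx hy.
have hf := floor_step h.
have qx : frac x / phi <= 1 by rewrite ler_pdivrMr // mul1r.
have qy : 0 <= frac y / phi by rewrite divr_ge0 ?frac_ge0 // ltW.
set d := Num.floor y - Num.floor x - c.
have hf' : (Num.floor x + c <= Num.floor y)%R by rewrite -(ler_int R) rmorphD.
have hd : (0 <= d)%R by rewrite /d; lia.
have [d0|dpos] := eqVneq d 0.
  have ei : Num.floor y = Num.floor x + c by move: d0; rewrite /d; lia.
  have e : (Num.floor y)%:~R = (Num.floor x)%:~R + c%:~R :> R by rewrite ei rmorphD.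
  rewrite e.
  have : frac x <= frac y by move: h; rewrite /frac e; lra.
  move=> hxy; suff : frac x / phi <= frac y / phi by lra.
  by rewrite ler_pM2r // invr_gt0.
have d1 : (1 <= d)%R by lia.
have : 1 <= d%:~R :> R by rewrite -[1]/(1%:~R) ler_int.
rewrite /d !rmorphB /= => hd1; lra.
Qed.
End Frac.

Lemma count_le_in (T : eqType) (p q : pred T) (s : seq T) :
  {in s, forall x, p x -> q x} -> (count p s <= count q s)%N.
Proof.
elim: s => [|y s IH] hs //=.
have h1 : (count p s <= count q s)%N by apply: IH => z zs; apply: hs; rewrite inE zs orbT.
have : p y -> q y by apply: hs; rewrite inE eqxx.
case: (p y); case: (q y) => /= hpq; [lia|by have := hpq isT|lia|lia].
Qed.

Lemma count_lt (T : eqType) (p q : pred T) (s : seq T) :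
  {in s, forall x, p x -> q x} -> (exists2 x, x \in s & q x && ~~ p x) ->
  (count p s < count q s)%N.
Proof.
elim: s => [|y s IH] hs [x]; first by [].
rewrite inE => /orP[/eqP ->|xs] hx /=.
  move: hx => /andP[-> /negbTE ->]; rewrite add0n add1n ltnS.
  by apply: count_le_in => z zs; apply: hs; rewrite inE zs orbT.
have h : (count p s < count q s)%N.
  by apply: IH; [move=> z zs; apply: hs; rewrite inE zs orbT | exists x].
have : p y -> q y by apply: hs; rewrite inE eqxx.
case: (p y); case: (q y) => /= hpq; [lia|by have := hpq isT|lia|lia].
Qed.

Lemma seq_argmax (R : realType) (g : nat -> R) (s : seq nat) : s != [::] ->
  exists2 z, z \in s & forall z', z' \in s -> g z' <= g z.
Proof.
elim: s => [|y s IH] // _.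
case: (eqVneq s [::]) => [->|sn].
  by exists y; rewrite ?inE // => z'; rewrite inE => /eqP ->.
have [z zs hz] := IH sn.
case: (lerP (g z) (g y)) => h.
  exists y; first by rewrite inE eqxx.
  move=> z'; rewrite inE => /orP[/eqP ->//|/hz]; move=> h'; exact: le_trans h' h.
exists z; first by rewrite inE zs orbT.
move=> z'; rewrite inE => /orP[/eqP ->|/hz //]; exact: ltW.
Qed.

Section Round.
Variables (R : realType) (m n : nat) (A : 'M[R]_(m, n)) (l : 'I_m -> 'I_n)
  (k : 'I_m -> nat) (b : 'I_m -> nat).
Hypothesis n0 : (0 < n)%N.
Hypothesis hc : is_circular l k A.

Lemma ymat_ext (f g : nat -> R) : (forall z, f z = g z) -> ymat n f = ymat n g.
Proof. by move=> e; apply/matrixP => i j; rewrite !mxE !e. Qed.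

Lemma per_mod (f : nat -> R) Y z : per n f Y -> f z = f (z %% n)%N + (z %/ n)%N%:R * Y.
Proof. by move=> hp; rewrite -(per_iter hp) addnC -divn_eq. Qed.

Lemma natint (q : nat) (M : int) : q%:R * M%:~R = (q%:Z * M)%:~R :> R.
Proof. by rewrite rmorphM /= pmulrn. Qed.

Lemma isint_all (f : nat -> R) M : per n f M%:~R -> (forall z, (z < n)%N -> isint (f z)) ->
  forall z, isint (f z).
Proof.
move=> hp h z; rewrite (per_mod z hp) natint isintDint; apply: h; exact: ltn_pmod.
Qed.

Lemma round0 (f : nat -> R) M : good l k b f M -> (forall z, (z < n)%N -> isint (f z)) ->
  inQstar A b (ymat n f).
Proof.
move=> hg h; apply: conv_pt; split; first exact: good_inQ hg.
case: hg => hp _ _; have hi := isint_all hp h.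
move=> j; exists (Num.floor (f (j + n)%N) - Num.floor (f (j + n).-1)).
by rewrite mxE rmorphB /= -!isint_floor.
Qed.

Lemma round N : forall (f : nat -> R) M, good l k b f M ->
  (count (fun z => ~~ isint (f z)) (iota 0 n) <= N)%N -> inQstar A b (ymat n f).
Proof.
elim: N => [|N IH] f M hg hcnt.
  apply: (round0 hg) => z hz.
  have : ~~ has (fun z => ~~ isint (f z)) (iota 0 n) by rewrite has_count -leqNgt.
  move=> /hasPn.
  by move=> /(_ z); rewrite mem_iota add0n hz negbK => ->.
case: (posnP (count (fun z => ~~ isint (f z)) (iota 0 n))) => hc0.
  apply: (round0 hg) => z hz.
  have : ~~ has (fun z => ~~ isint (f z)) (iota 0 n) by rewrite has_count hc0.
  move=> /hasPn.
  by move=> /(_ z); rewrite mem_iota add0n hz negbK => ->.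
have [z0 z0in hz0] : exists2 z0, z0 \in iota 0 n & ~~ isint (f z0).
  by apply/hasP; rewrite has_count.
have sn : iota 0 n != [::] by move: z0in; case: (iota 0 n).
have [zs zsin hzs] := @seq_argmax R (fun z => frac (f z)) (iota 0 n) sn.
case: hg => hp hm hr.
set phi := frac (f zs).
have phipos : 0 < phi.
  apply: lt_le_trans (hzs _ z0in); rewrite lt_def frac_ge0 andbT frac0; exact: hz0.
have fle : forall z, frac (f z) <= phi.
  move=> z; rewrite (per_mod z hp) natint fracDint; apply: hzs.
  by rewrite mem_iota add0n ltn_pmod.
pose a0 z : R := (Num.floor (f z))%:~R.
pose a1 z : R := (Num.floor (f z))%:~R + frac (f z) / phi.
have ga0 : good l k b a0 M.
  split.
  - by move=> z; rewrite /a0 hp floorDint rmorphD.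
  - move=> z; have := floor_step (c := 0) (x := f z) (y := f z.+1).
    by rewrite !rmorph0 !addr0 => /(_ (hm z)).
  - move=> i; have e : (b i)%:R = ((b i)%:Z)%:~R :> R by rewrite pmulrn.
    have hh : f (base l (FRow n i)) + ((b i)%:Z)%:~R <= f (base l (FRow n i) + k i)%N.
      by rewrite -e; move: (hr i); lra.
    have := floor_step hh; rewrite /a0 -e; lra.
have ga1 : good l k b a1 M.
  split.
  - by move=> z; rewrite /a1 hp floorDint fracDint rmorphD /=; ring.
  - move=> z; have := frac_step (c := 0) (x := f z) (y := f z.+1) (phi := phi).
    by rewrite /a1 !rmorph0 !addr0 => /(_ (hm z) phipos (fle _) (fle _)).
  - move=> i; have := frac_step (c := (b i)%:Z) (x := f (base l (FRow n i)))
      (y := f (base l (FRow n i) + k i)%N) (phi := phi).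
    have e : (b i)%:R = ((b i)%:Z)%:~R :> R by rewrite pmulrn.
    have hh : f (base l (FRow n i)) + ((b i)%:Z)%:~R <= f (base l (FRow n i) + k i)%N.
      by rewrite -e; move: (hr i); lra.
    move=> /(_ hh phipos (fle _) (fle _)); rewrite /a1 -e; lra.
have ha1 : inQstar A b (ymat n a1).
  apply: (IH a1 M ga1); rewrite -ltnS; apply: leq_trans hcnt.
  apply: count_lt.
    move=> z _; apply: contra => hz; rewrite /a1.
    by move: hz; rewrite -frac0 => /eqP ->; rewrite mul0r addr0 isint_int.
  exists zs => //; apply/andP; split; last first.
    rewrite /a1 /phi divff ?gt_eqF // negbK.
    have -> : (1 : R) = (1%:Z)%:~R by []. 
    rewrite -rmorphD; exact: isint_int.
  by rewrite -frac0 gt_eqF.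
have ha0 : inQstar A b (ymat n a0).
  apply: (round0 ga0) => z _; exact: isint_int.
have -> : ymat n f = (1 - phi) *: ymat n a0 + phi *: ymat n a1.
  rewrite -ymat_lin; apply: ymat_ext => z; rewrite /a0 /a1 /frac; field.
  by rewrite gt_eqF.
apply: conv2 => //; rewrite ltW //=; apply: ltW; exact: frac_lt1.
Qed.
End Round.

Lemma conv_lin (R : realType) (n : nat) (S : 'cV[R]_n -> Prop) (c : 'I_n -> R) (lhs : R) x :
  conv_hull S x -> (forall y, S y -> lhs <= \sum_j c j * y j 0) ->
  lhs <= \sum_j c j * x j 0.
Proof.
move=> [N [pts [lam [h1 [h2 [h3 ->]]]]]] hS.
have -> : \sum_j c j * (\sum_t lam t *: pts t) j 0 = \sum_t lam t * \sum_j c j * pts t j 0.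
  under eq_bigr do rewrite summxE mulr_sumr.
  rewrite exchange_big /=; apply: eq_bigr => t _; rewrite mulr_sumr.
  by apply: eq_bigr => j _; rewrite mxE; ring.
have -> : lhs = \sum_t lam t * lhs by rewrite -mulr_suml h2 mul1r.
by apply: ler_sum => t _; apply: ler_wpM2l => //; apply: hS.
Qed.

Lemma inQstar_inQ (R : realType) m n (A : 'M[R]_(m, n)) b x :
  inQstar A b x -> inQ A b x.
Proof.
move=> hx; split.
- move=> i; rewrite mxE.
  have := conv_lin (c := fun j => A i j) (lhs := (b i)%:R) hx. apply => y [[hy _] _].
  by have := hy i; rewrite mxE.
- move=> j; have := conv_lin (c := fun j' => (j' == j)%:R) (lhs := 0) hx.
  rewrite (bigD1 j) //= eqxx mul1r big1 ?addr0; last first.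
    by move=> j' /negbTE ->; rewrite mul0r.
  apply=> y [[_ hy] _]; rewrite (bigD1 j) //= eqxx mul1r big1 ?addr0 //.
  by move=> j' /negbTE ->; rewrite mul0r.
Qed.

Lemma count_natr (R : realType) (T : Type) (p : pred T) (s : seq T) :
  (count p s)%:R = \sum_(a <- s) ((p a)%:R : R).
Proof. by elim: s => [|a s IH] /=; rewrite ?big_nil ?big_cons ?natrD ?IH. Qed.

Section Main.
Variables (R : realType) (m n : nat) (A : 'M[R]_(m, n)) (l : 'I_m -> 'I_n)
  (k : 'I_m -> nat) (b : 'I_m -> nat).
Hypothesis n0 : (0 < n)%N.
Hypothesis hc : is_circular l k A.

Definition Fs s (y : 'cV[R]_n) := \sum_(a <- s | ~~ is_rev a) js l k a y.
Definition Ss s (y : 'cV[R]_n) := \sum_(a <- s | is_rev a) js l k a y.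
Definition Bf (s : seq (darc m n)) : R := \sum_(a <- s | ~~ is_rev a) bb R b a.
Definition Rb (s : seq (darc m n)) : R := \sum_(a <- s | is_rev a) bb R b a.

Lemma sum_split (F G : darc m n -> R) (s : seq (darc m n)) :
  \sum_(a <- s) (if is_rev a then F a else G a) =
  \sum_(a <- s | is_rev a) F a + \sum_(a <- s | ~~ is_rev a) G a.
Proof.
rewrite (bigID (@is_rev m n)) /=; congr (_ + _); apply: eq_bigr => a; first by move ->.
by move/negbTE ->.
Qed.

Lemma FS s y : circuit l k s -> Fs s y - Ss s y = (wind k s)%:~R * \sum_j y j 0.
Proof.
move=> hcs; rewrite -(Delta_circ n0 hcs (per_ax n0 y)).
have -> : \sum_(a <- s) Delta l k (ax n0 y) a =
  \sum_(a <- s) (if is_rev a then - js l k a y else js l k a y).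
  apply: eq_bigr => a _; rewrite (Delta_js l n0 (hk hc) a (per_ax n0 y)) ymat_ax /eps.
  by case: is_rev; rewrite ?mulN1r ?mul1r.
by rewrite sum_split sumrN /Fs /Ss addrC.
Qed.

Lemma inQ_FS s y : inQ A b y -> Bf s <= Fs s y /\ Rb s <= Ss s y.
Proof.
by move=> hy; split; apply: ler_sum => a _; apply: (inQ_js hc).
Qed.

Lemma pminus_sum s (y : 'cV[R]_n) (r : int) :
  \sum_j ((pminus l k s j)%:Z + r)%:~R * y j 0 = Ss s y + r%:~R * \sum_j y j 0.
Proof.
under eq_bigr do rewrite rmorphD /= mulrDl -pmulrn.
rewrite big_split /= -mulr_sumr; congr (_ + _).
rewrite /pminus; under eq_bigr do rewrite count_natr mulr_suml.
rewrite exchange_big /= /Ss [RHS]big_mkcond /=; apply: eq_bigr => a _.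
rewrite /js; case: is_rev => /=; last by rewrite big1 // => j _; rewrite mul0r.
by apply: eq_bigr => j _; case: jumps; rewrite ?mul1r ?mul0r.
Qed.

Lemma revb_R s : ((rev_b b s)%:~R : R) = Rb s.
Proof.
rewrite /rev_b rmorph_sum /Rb [RHS]big_mkcond /=; apply: eq_bigr => a _.
by case: a => [i|j|i|j] /=; rewrite ?pmulrn.
Qed.

Lemma tg_R s : ((t_gamma b s)%:~R : R) = Bf s - Rb s.
Proof.
rewrite /t_gamma rmorph_sum.
have -> : \sum_(a <- s) ((arc_b b a)%:~R : R) =
  \sum_(a <- s) (if is_rev a then - bb R b a else bb R b a).
  by apply: eq_bigr; case=> [i|j|i|j] _ /=; rewrite ?rmorphN /= ?pmulrn ?rmorph0 ?oppr0.
by rewrite (sum_split (fun a => - bb R b a) (bb R b)) sumrN /Bf /Rb addrC.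
Qed.

Lemma beta_facts (s : seq (darc m n)) : (0 < wind k s)%R ->
  (beta_gamma k b s * wind k s <= t_gamma b s)%R /\
  (t_gamma b s < (beta_gamma k b s + 1) * wind k s)%R.
Proof.
move=> hp; have hpq : (0 : rat) < (wind k s)%:~R by rewrite ltr0z.
have h1 := floor_le ((t_gamma b s)%:~R / (wind k s)%:~R : rat).
have h2 := floorD1_gt ((t_gamma b s)%:~R / (wind k s)%:~R : rat).
rewrite ler_pdivlMr // -rmorphM ler_int in h1.
rewrite ltr_pdivrMr // -rmorphM ltr_int in h2.
by split.
Qed.

Lemma int_sum (y : 'cV[R]_n) : is_int_vec y ->
  \sum_j y j 0 = (\sum_j Num.floor (y j 0))%:~R.
Proof.
move=> hy; rewrite rmorph_sum; apply: eq_bigr => j _.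
by have [z ->] := hy j; rewrite intrKfloor.
Qed.

Lemma valid s (y : 'cV[R]_n) : inQ A b y -> is_int_vec y -> circuit l k s ->
  (2 <= wind k s)%R -> gamma_ineq l k b s y.
Proof.
move=> hy hint hcs hp2.
have hp : (0 < wind k s)%R by lia.
have [hb1 hb2] := beta_facts hp.
rewrite /gamma_ineq pminus_sum rmorphD rmorphM /= revb_R rmorphD /=.
have e := FS y hcs; have [i1 i2] := inQ_FS s hy; have et := tg_R s.
rewrite (int_sum hint) in e *.
set T := \sum_j _ in e *.
set p := wind k s in e hp hb1 hb2 *.
set t := t_gamma b s in et hb1 hb2 *.
set be := beta_gamma k b s in hb1 hb2 *.
rewrite /r_gamma -/t -/be -/p.
have ht1 : (be * p)%:~R <= t%:~R :> R by rewrite ler_int.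
have ht2 : t%:~R < ((be + 1) * p)%:~R :> R by rewrite ltr_int.
rewrite !rmorphM !rmorphD /= in ht1 ht2 *; rewrite rmorphN rmorphM /= !rmorph1 in ht2 *.
case: (lerP T be) => hT.
- have hT' : T%:~R <= be%:~R :> R by rewrite ler_int.
  have h3 : 0 <= (p%:~R - (t%:~R - be%:~R * p%:~R)) * (be%:~R - T%:~R) :> R.
    by apply: mulr_ge0; lra.
  nra.
- have hT' : be%:~R + 1 <= T%:~R :> R.
    by rewrite -[1]/(1%:~R : R) -rmorphD ler_int; lia.
  have h3 : 0 <= (t%:~R - be%:~R * p%:~R) * (T%:~R - (be%:~R + 1)) :> R.
    by apply: mulr_ge0; lra.
  nra.
Qed.

Lemma good_ax x M : inQ A b x -> \sum_j x j 0 = M%:~R -> good l k b (ax n0 x) M.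
Proof.
move=> [h1 h2] hT; split.
- by rewrite -hT; exact: per_ax.
- move=> z; rewrite -subr_ge0 (steps n0 (per_ax n0 x)) ymat_ax; exact: h2.
- move=> i; rewrite (js_lemma l n0 (hk hc) (FRow n i) (per_ax n0 x)) ymat_ax -(Amul hc); exact: h1.
Qed.

Lemma step_Delta (f : nat -> R) Y z : per n f Y ->
  f z.+1 - f z = Delta l k f (FShort m (om n0 z.+1)).
Proof.
move=> hp; rewrite (Delta_js l n0 (hk hc) _ hp) /eps /= mul1r (steps n0 hp) /js.
by rewrite -big_mkcond /= big_pred1_eq.
Qed.

Lemma Delta_RS (f : nat -> R) j : Delta l k f (RShort m j) = - Delta l k f (FShort m j).
Proof. by rewrite /Delta /eps /=; ring. Qed.
Lemma Delta_RR (f : nat -> R) i : Delta l k f (RRow n i) = - Delta l k f (FRow n i).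
Proof. by rewrite /Delta /eps /=; ring. Qed.
Lemma Delta_FR (f : nat -> R) i :
  Delta l k f (FRow n i) = f (base l (FRow n i) + k i)%N - f (base l (FRow n i)).
Proof. by rewrite /Delta /eps /= mul1r. Qed.

Lemma In_mem (T : eqType) (x : T) s : x \in s -> List.In x s.
Proof. by elim: s => //= y s IH; rewrite inE => /orP[/eqP ->|/IH]; [left|right]. Qed.

Definition all_arcs : seq (darc m n) :=
  map (@FRow m n) (enum 'I_m) ++ map (@FShort m n) (enum 'I_n) ++
  map (@RRow m n) (enum 'I_m) ++ map (@RShort m n) (enum 'I_n).

Lemma all_arcsP a : List.In a all_arcs.
Proof.
rewrite /all_arcs; case: a => [i|j|i|j]; rewrite !List.in_app_iff.
- by left; apply: List.in_map; apply: In_mem; rewrite mem_enum.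
- by right; left; apply: List.in_map; apply: In_mem; rewrite mem_enum.
- by right; right; left; apply: List.in_map; apply: In_mem; rewrite mem_enum.
- by right; right; right; apply: List.in_map; apply: In_mem; rewrite mem_enum.
Qed.

Lemma cnt_le (f : nat -> R) : (count (fun z => ~~ isint (f z)) (iota 0 n) <= n)%N.
Proof. by rewrite -{2}(size_iota 0 n) count_size. Qed.

Lemma Sdelta_rev s (x : 'cV[R]_n) :
  \sum_(a <- s | is_rev a) Delta l k (ax n0 x) a = - Ss s x.
Proof.
rewrite /Ss -sumrN [LHS]big_mkcond [RHS]big_mkcond /=; apply: eq_bigr => a _.
case ha: (is_rev a) => //.
by rewrite (Delta_js l n0 (hk hc) a (per_ax n0 x)) ymat_ax /eps ha mulN1r.
Qed.

Lemma key_ineq s x (lam : R) (T0 : int) :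
  inQ A b x -> circuit l k s -> 0 <= lam < 1 ->
  \sum_j x j 0 = T0%:~R + lam ->
  (2 <= wind k s -> ~~ (wind k s %| t_gamma b s)%Z -> gamma_ineq l k b s x) ->
  lam * Rb s - Ss s x + (1 - lam) * Bf s - (wind k s)%:~R * ((1 - lam) * T0%:~R) <= 0.
Proof.
move=> hx hcs /andP[l0 l1] hT hG.
have e := FS x hcs; have [i1 i2] := inQ_FS s hx; have et := tg_R s.
rewrite hT in e.
set p := wind k s in e hG *.
set t := t_gamma b s in et hG *.
case: (lerP t (p * T0)) => h1.
  have h1' : t%:~R <= p%:~R * T0%:~R :> R by rewrite -rmorphM ler_int.
  have h3 : 0 <= (1 - lam) * (p%:~R * T0%:~R - t%:~R) :> R by apply: mulr_ge0; lra.
  nra.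
case: (lerP (p * (T0 + 1)) t) => h2.
  have h2' : p%:~R * (T0%:~R + 1) <= t%:~R :> R.
    by rewrite -[1]/(1%:~R : R) -rmorphD -rmorphM ler_int.
  have h3 : 0 <= lam * (t%:~R - p%:~R * (T0%:~R + 1)) :> R by apply: mulr_ge0; lra.
  nra.
have pp : (0 < p)%R by nia.
have p2 : (2 <= p)%R.
  case: (lerP 2 p) => // hp1; have hp : p = 1 by lia.
  by move: h1 h2; rewrite hp; lia.
have nd : ~~ (p %| t)%Z.
  apply/negP => /dvdzP [c hc']; move: h1 h2; rewrite hc' => h1 h2.
  have a1 : (T0 < c)%R by rewrite -(ltr_pM2l pp) [p * c]mulrC.
  have a2 : (c < T0 + 1)%R by rewrite -(ltr_pM2l pp) [p * c]mulrC.
  lia.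
have := hG p2 nd; rewrite /gamma_ineq pminus_sum rmorphD /= revb_R.
have hbe : beta_gamma k b s = T0.
  apply: floor_def; have hpq : (0 : rat) < p%:~R by rewrite ltr0z.
  rewrite ler_pdivlMr // ltr_pdivrMr // -!rmorphM !ler_int !ltr_int.
  by apply/andP; split; lia.
rewrite /r_gamma hbe -/t -/p rmorphD rmorphM /= rmorphB rmorphM rmorphD /= hT.
have h1' : p%:~R * T0%:~R < t%:~R :> R by rewrite -rmorphM ltr_int.
rewrite rmorph1; nra.
Qed.

Lemma hard x : inQ A b x ->
  (forall s, circuit l k s -> (2 <= wind k s)%R -> ~~ (wind k s %| t_gamma b s)%Z ->
     gamma_ineq l k b s x) -> inQstar A b x.
Proof.
move=> hx hG.
set T := \sum_j x j 0.
set T0 := Num.floor T.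
set lam := T - T0%:~R.
have lam0 : 0 <= lam by rewrite /lam subr_ge0 floor_le.
have lam1 : lam < 1 by have := floorD1_gt T; rewrite rmorphD /= rmorph1 /lam; lra.
have hT : T = T0%:~R + lam by rewrite /lam; ring.
case: (eqVneq lam 0) => hl.
  rewrite -(ymat_ax n0 x); apply: (round n0 hc (N := n)) (cnt_le _).
  by apply: good_ax hx _; rewrite -/T hT hl addr0.
have lpos : 0 < lam by rewrite lt_def hl lam0.
set U := (1 - lam) * T0%:~R.
pose cc a := if is_rev a then lam * bb R b a + Delta l k (ax n0 x) a
             else (1 - lam) * bb R b a.
pose w a := cc a - (sig l k a)%:~R * U.
have [v hv] : exists v : nat -> R, forall a, w a <= v (arc_head l k a) - v (arc_tail l k a).
  apply: (BF_feasible (tl := arc_tail l k) (hd := arc_head l k) (n := n) (arcs := all_arcs)).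
  - by move=> a; apply: tail_lt.
  - exact: all_arcsP.
  move=> c c0 cu ch; have hcs : circuit l k c by [].
  rewrite /w sumrB -mulr_suml -rmorph_sum -wind_sig //.
  rewrite /cc sum_split big_split /= Sdelta_rev -!mulr_sumr -/(Rb c) -/(Bf c).
  have := key_ineq (lam := lam) (T0 := T0) hx hcs _ _ (hG c hcs).
  by rewrite lam0 lam1 -hT => /(_ isT erefl); rewrite /U.
pose au z := v (z %% n)%N + (z %/ n)%N%:R * U.
have pau : per n au U.
  by move=> z; rewrite /au modnDr divnDr // divnn n0 natrD /= mulrDl mul1r addrA.
have hau : forall a, cc a <= Delta l k au a.
  move=> a; rewrite (Delta_per l k n0 a pau) /au.
  rewrite !modn_small ?(head_lt l k n0) ?(tail_lt l k n0) // !divn_small ?(head_lt l k n0) ?(tail_lt l k n0) // mul0r !addr0.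
  have := hv a; rewrite /w; lra.
have l1 : 0 < 1 - lam by lra.
pose az z := au z / (1 - lam).
pose aw z := (ax n0 x z - au z) / lam.
have gz : good l k b az T0.
  split.
  - by move=> z; rewrite /az pau /U; field; rewrite gt_eqF.
  - move=> z; rewrite -subr_ge0 /az -mulrBl; apply: divr_ge0; last exact: ltW.
    rewrite (step_Delta z pau); have := hau (FShort m (om n0 z.+1)); rewrite /cc /=; lra.
  - move=> i; rewrite /az -mulrBl ler_pdivlMr // -Delta_FR.
    by have := hau (FRow n i); rewrite /cc /=; lra.
have gw : good l k b aw (T0 + 1).
  split.
  - move=> z; rewrite /aw pau (per_ax n0 x) -/T hT rmorphD /= rmorph1 /U; field.
    by rewrite gt_eqF.
  - move=> z; rewrite -subr_ge0 /aw -mulrBl; apply: divr_ge0; last exact: ltW.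
    have e : ax n0 x z.+1 - au z.+1 - (ax n0 x z - au z) =
      (ax n0 x z.+1 - ax n0 x z) - (au z.+1 - au z) by ring.
    rewrite e (step_Delta z pau) (step_Delta z (per_ax n0 x)).
    have := hau (RShort m (om n0 z.+1)); rewrite /cc /= !Delta_RS; lra.
  - move=> i; rewrite /aw -mulrBl ler_pdivlMr //.
    have e : ax n0 x (base l (FRow n i) + k i) - au (base l (FRow n i) + k i) -
      (ax n0 x (base l (FRow n i)) - au (base l (FRow n i))) =
      Delta l k (ax n0 x) (FRow n i) - Delta l k au (FRow n i) by rewrite !Delta_FR; ring.
    rewrite e; have := hau (RRow n i); rewrite /cc /= !Delta_RR; lra.
have -> : x = (1 - lam) *: ymat n az + lam *: ymat n aw.
  rewrite -{1}(ymat_ax n0 x) -ymat_lin; apply: ymat_ext => z; rewrite /az /aw.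
  by field; rewrite hl gt_eqF.
apply: conv2; first exact: (round n0 hc (N := n)) gz (cnt_le _).
  exact: (round n0 hc (N := n)) gw (cnt_le _).
by rewrite lam0 ltW.
Qed.

End Main.

Unset Implicit Arguments.
Set Strict Implicit.
Set Printing Implicit Defensive.

Theorem theorem4p8 (R : realType) (m n : nat) (A : 'M[R]_(m, n))
    (l : 'I_m -> 'I_n) (k : 'I_m -> nat) (b : 'I_m -> nat) :
  is_circular l k A ->
  forall x : 'cV[R]_n,
    inQstar A b x <->
    (inQ A b x /\
     forall s : seq (darc m n),
       circuit l k s -> 2 <= wind k s -> ~~ (wind k s %| t_gamma b s)%Z ->
       gamma_ineq l k b s x).
Proof.
move=> hc x; case: (posnP n) => hn.
  subst n; split.
    move=> hx; split; first exact: inQstar_inQ.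
    move=> [|a s] [//= _ _] _ _; case: a => [i|j|i|j].
    - by have [/andP[h1 h2] _] := hc i; move: h1 h2; lia.
    - by case: j.
    - by have [/andP[h1 h2] _] := hc i; move: h1 h2; lia.
    - by case: j.
  by move=> [hx _]; apply: conv_pt; split => // -[].
split.
  move=> hx; split; first exact: inQstar_inQ.
  move=> s hcs hp2 _; rewrite /gamma_ineq.
  apply: (conv_lin hx) => y [hy hint].
  exact: (valid hn hc hy hint hcs hp2).
by move=> [hx hG]; exact: (hard hn hc hx hG).
Qed.
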